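(* The functions $\epsilon_n/w$ satisfy the same differential equation as the orthogonal polynomials, namely \[ W(x)\frac{\mathrm{d}}{\mathrm{d}x}\frac{\epsilon_n(x)}{w(x)} = (\Omega_n(x) - V(x))\frac{\epsilon_n(x)}{w(x)} - a_n \Theta_n(x)\frac{\epsilon_{n-1}(x)}{w(x)}. \]
   Context: Let $w$ be a weight on an interval $I$ whose logarithmic derivative is rational, $\frac{\mathrm{d}}{\mathrm{d}x}\ln w(x) = \frac{2V}{W}$ with $V,W$ polynomials. Let $\{p_n\}$ be the orthonormal polynomials for $w$ on $I$, $p_n(x)=\gamma_n x^n+\gamma_{n,1}x^{n-1}+\dots$, with three term recurrence $a_{n+1}p_{n+1} = (x-b_n)p_n - a_n p_{n-1}$. Let $f(x)=\int_I \frac{w(s)}{x-s}ds$ be the Stieltjes function, which satisfies $W f' = 2Vf + U$ for a polynomial $U$, and define the associated functions $\epsilon_n(x)=\int_I \frac{p_n(s)}{x-s}w(s)\,ds$ and associated polynomials $\phi_{n-1}(x)=\int_I\frac{p_n(s)-p_n(x)}{s-x}w(s)\,ds$, so that $fp_n=\phi_{n-1}+\epsilon_n$. Define the polynomials $\Theta_n = W( \epsilon_n p_n' - p_n\epsilon_n') + 2V \epsilon_np_n$ and $\Omega_n = a_nW( \epsilon_{n-1} p_n' - p_{n-1}\epsilon_n') + a_nV(\epsilon_{n-1}p_n + \epsilon_np_{n-1})$. It is known (Theorem 2.1) that the polynomials satisfy $W(x)p_n'(x) = (\Omega_n(x) - V(x))p_n(x) - a_n \Theta_n(x)p_{n-1}(x)$.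 *)

(* Defs.v *)
From HB Require Import structures.
From mathcomp Require Import all_boot all_order all_algebra.
From mathcomp Require Import all_classical all_reals all_analysis.
From mathcomp Require Import complex.
Import Order.TTheory GRing.Theory Num.Theory.
Import numFieldNormedType.Exports.

Set Implicit Arguments.
Unset Strict Implicit.
Unset Printing Implicit Defensive.

Local Open Scope ring_scope.
Local Open Scope complex_scope.

Definition cpoly (R : rcfType) (q : {poly R}) (z : R[i]) : R[i] :=
  (map_poly (fun r : R => r%:C) q).[z].

Definition cderive (R : rcfType) (f : R[i] -> R[i]) (z : R[i]) : R[i] :=
  @derive1 R[i] R[i]^o f z.

Definition cderivable (R : rcfType) (f : R[i] -> R[i]) (z : R[i]) : Prop :=
  @derivable R[i] R[i]^o R[i]^o f z 1.

Definition cRint (R : realType) (D : set R) (f : R -> R[i]) : R[i] :=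
  Complex (Rintegral (@lebesgue_measure R) D (fun s => complex.Re (f s)))
          (Rintegral (@lebesgue_measure R) D (fun s => complex.Im (f s))).

Definition eps (R : realType) (I : interval R) (w : R -> R)
  (p : nat -> {poly R}) (n : nat) (z : R[i]) : R[i] :=
  cRint [set` I] (fun s => ((p n).[s] * w s)%:C / (z - s%:C)).

Definition Theta (R : realType) (I : interval R) (w : R -> R)
  (p : nat -> {poly R}) (V W : {poly R}) (n : nat) (z : R[i]) : R[i] :=
  cpoly W z * (eps I w p n z * cpoly (p n)^`() z
               - cpoly (p n) z * cderive (eps I w p n) z)
  + 2 * cpoly V z * eps I w p n z * cpoly (p n) z.

Definition Omega (R : realType) (I : interval R) (w : R -> R)
  (p : nat -> {poly R}) (a : nat -> R) (V W : {poly R}) (n : nat)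
  (z : R[i]) : R[i] :=
  (a n)%:C * cpoly W z * (eps I w p n.-1 z * cpoly (p n)^`() z
                          - cpoly (p n.-1) z * cderive (eps I w p n) z)
  + (a n)%:C * cpoly V z * (eps I w p n.-1 z * cpoly (p n) z
                            + eps I w p n z * cpoly (p n.-1) z).

(* Main.v *)
Require Import Defs.
From HB Require Import structures.
From mathcomp Require Import all_boot all_order all_algebra.
From mathcomp Require Import all_classical all_reals all_analysis.
From mathcomp Require Import complex.
From mathcomp Require Import ring lra.
Import Order.TTheory GRing.Theory Num.Theory.
Import numFieldNormedType.Exports.
Local Open Scope ring_scope.
Local Open Scope complex_scope.
Lemma mconv (R : realType) (D : set R) (h : R -> R) : measurable_fun D h ->
  measurable_fun (D : set (measurableTypeR R)) (h : measurableTypeR R -> R).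
Proof. move=> H. exact: H. Qed.
Lemma mconvD (R : realType) (D : set R) : measurable D -> measurable (D : set (measurableTypeR R)).
Proof. move=> H. exact: H. Qed.
Arguments mconv {R D h}.

Lemma normC_real (R : rcfType) (a : R) : `|a%:C| = `|a|%:C.
Proof. by rewrite normc_def /= expr0n /= addr0 sqrtr_sqr. Qed.

Lemma normi (R : rcfType) : `|'i : R[i]| = 1.
Proof. by rewrite normc_def /= expr0n /= add0r expr1n sqrtr1. Qed.

Lemma normc_ge_Im (R : rcfType) (x : R[i]) : `|complex.Im x|%:C <= `|x|.
Proof.
have -> : complex.Im x = - complex.Re (x * 'i) by case: x => a c /=; ring.
by rewrite normrN (le_trans (normc_ge_Re _)) // normrM normi mulr1.
Qed.
Arguments normc_ge_Im {R}. Arguments normi {R}. Arguments normC_real {R}.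
 Arguments mconvD {R D}.

Section NC.
Context {R : rcfType}.
Definition nc (x : R[i]) : R := complex.Re `|x|.
Lemma ncE x : `|x| = (nc x)%:C.
Proof. by rewrite /nc RRe_real // normr_real. Qed.
Lemma nc_ge0 x : 0 <= nc x.
Proof. by have := normr_ge0 x; rewrite ncE -(lecR 0). Qed.
Lemma ncM x y : nc (x * y) = nc x * nc y.
Proof. by apply: (@complexI R); rewrite rmorphM /= -!ncE normrM. Qed.
Lemma ncV x : nc (x^-1) = (nc x)^-1.
Proof. by apply: (@complexI R); rewrite fmorphV /= -!ncE normfV. Qed.
Lemma ncN x : nc (- x) = nc x.
Proof. by rewrite /nc normrN. Qed.
Lemma ncD x y : nc (x + y) <= nc x + nc y.
Proof. by rewrite -lecR rmorphD /= -!ncE ler_normD. Qed.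
Lemma nc_real (a : R) : nc a%:C = `|a|.
Proof. by apply: (@complexI R); rewrite -ncE normC_real. Qed.
Lemma nc_eq0 x : (nc x == 0) = (x == 0).
Proof.
have [->|hx] := eqVneq x 0; first by rewrite /nc normr0 eqxx.
apply/negbTE; apply: contra hx => /eqP h.
by rewrite -normr_eq0 ncE h.
Qed.
Lemma nc_le x (e : R) : (`|x| <= e%:C) = (nc x <= e).
Proof. by rewrite ncE lecR. Qed.
Lemma nc_ge x (e : R) : (e%:C <= `|x|) = (e <= nc x).
Proof. by rewrite ncE lecR. Qed.
Lemma nc_lt x (e : R) : (`|x| < e%:C) = (nc x < e).
Proof. by rewrite ncE ltcR. Qed.

Lemma pt_bound (a h : R[i]) (d : R) : 0 < d -> d <= nc a -> nc h <= d / 2 -> h != 0 ->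
  nc (- (a^-1 * a^-1) - h^-1 * ((a + h)^-1 - a^-1)) <= nc h * (2 / d ^+ 3).
Proof.
move=> d0 da dh h0.
have a0 : a != 0 by rewrite -nc_eq0 gt_eqF // (lt_le_trans d0).
have B : d / 2 <= nc (a + h).
  have := ncD (a + h) (- h); rewrite addrK ncN => H.
  lra.
have ah0 : a + h != 0 by rewrite -nc_eq0 gt_eqF // (lt_le_trans _ B) // divr_gt0.
have -> : - (a^-1 * a^-1) - h^-1 * ((a + h)^-1 - a^-1) = - h * (a^-1 * a^-1 * (a + h)^-1).
  by field; rewrite ah0 a0 h0.
rewrite ncM ncN !ncM !ncV; apply: ler_wpM2l; first exact: nc_ge0.
rewrite -!invfM.
have -> : 2 / d ^+ 3 = (d ^+ 3 / 2)^-1.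
  have d3 : d ^+ 3 != 0 by rewrite expf_neq0 // gt_eqF.
  by field; rewrite gt_eqF.
have p1 : 0 < d ^+ 3 / 2 by rewrite divr_gt0 // exprn_gt0.
have p2 : 0 < nc a * nc a * nc (a + h).
  by rewrite !mulr_gt0 // (lt_le_trans _ da, lt_le_trans _ B) // divr_gt0.
rewrite (lef_pV2 (x := nc a * nc a * nc (a + h))) ?posrE //.
have A0 : 0 <= nc a := nc_ge0 a.
have -> : d ^+ 3 / 2 = d * d * (d / 2) by rewrite !exprS expr0 mulr1 !mulrA.
have H : d * d <= nc a * nc a by apply: ler_pM => //; apply: ltW.
apply: ler_pM => //.
- by rewrite mulr_ge0 // ltW.
- by rewrite divr_ge0 // ltW.
Qed.
End NC.

Section S.
Context {R : realType} (D : set R).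

Lemma meas_inv_pos (P : {poly R}) (m : R) : 0 < m ->
  (forall s, D s -> m <= P.[s]) -> measurable_fun D (fun s => (P.[s])^-1).
Proof.
move=> m0 Pm.
have c : continuous (fun s => (Num.max P.[s] m)^-1).
  move=> s; apply: (@continuousV R R (fun s => Num.max P.[s] m) s).
    by rewrite gt_eqF // (lt_le_trans m0) // le_max lexx orbT.
  apply: (@continuous_max R R (horner P) (cst m)); first exact: continuous_horner.
  exact: cst_continuous.
have := measurable_funTS (measurable_realfun.continuous_measurable_fun c) (D := D).
apply: eq_measurable_fun => s; rewrite inE => Ds.
by rewrite max_l // Pm.
Qed.


Definition mK (K : R -> R[i]) :=
  [/\ measurable_fun D (fun s => complex.Re (K s)),
      measurable_fun D (fun s => complex.Im (K s)) &
      exists B : R, forall s, D s -> `|K s| <= B%:C].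

Lemma mK_inv (u : R[i]) (e : R) : 0 < e ->
  (forall s, D s -> e%:C <= `|u - s%:C|) -> mK (fun s => (u - s%:C)^-1).
Proof.
move=> e0 De.
have Q : forall s, D s -> e ^+ 2 <= ((complex.Re u - s) ^+ 2 + (complex.Im u) ^+ 2).
  move=> s Ds; have := De s Ds; rewrite normc_def lecR.
  case: u {De} => x y /=; rewrite subr0 => h.
  have q0 : 0 <= (x - s) ^+ 2 + y ^+ 2 by rewrite addr_ge0 // sqr_ge0.
  have := sqr_sqrtr q0; set t := Num.sqrt _ => <-.
  by rewrite ler_pXn2r // ?nnegrE ?sqrtr_ge0 // ltW.
set P : {poly R} := ('X - (complex.Re u)%:P) ^+ 2 + ((complex.Im u) ^+ 2)%:P.
have PE : forall s, P.[s] = (complex.Re u - s) ^+ 2 + (complex.Im u) ^+ 2.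
  by move=> s; rewrite /P !hornerE; ring.
have mI : measurable_fun D (fun s => (P.[s])^-1).
  apply: (@meas_inv_pos P (e ^+ 2)); first by rewrite exprn_gt0.
  by move=> s Ds; rewrite PE; apply: Q.
split.
- have mR : measurable_fun D (fun s => ('X * (-1)%:P + (complex.Re u)%:P).[s] * (P.[s])^-1).
    apply: measurable_realfun.measurable_funM => //.
    apply: measurable_funTS; apply: measurable_realfun.continuous_measurable_fun.
    exact: continuous_horner.
  apply: eq_measurable_fun mR => s _.
  rewrite PE; case: u {De Q P PE mI} => x y /=.
  by rewrite !hornerE subr0; congr (_ / _); ring.
- have mI2 : measurable_fun D (fun s => (- complex.Im u) * (P.[s])^-1).
    by apply: measurable_realfun.measurable_funM => //.
  apply: eq_measurable_fun mI2 => s _.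
  rewrite PE; case: u {De Q P PE mI} => x y /=.
  by rewrite subr0 mulNr.
- exists e^-1 => s Ds; rewrite normfV.
  have -> : (e^-1)%:C = (e%:C)^-1 by rewrite fmorphV.
  have ep : e%:C \is Num.pos by rewrite posrE ltcR.
  rewrite lef_pV2 //; first exact: De.
  by rewrite posrE (lt_le_trans _ (De s Ds)) // -posrE.
Qed.


Lemma mKM K1 K2 : mK K1 -> mK K2 -> mK (fun s => K1 s * K2 s).
Proof.
move=> [r1 i1 [B1 b1]] [r2 i2 [B2 b2]]; split.
- have m : measurable_fun D (fun s => complex.Re (K1 s) * complex.Re (K2 s)
                                    - complex.Im (K1 s) * complex.Im (K2 s)).
    by apply: measurable_realfun.measurable_funB;
       apply: measurable_realfun.measurable_funM.
  by apply: eq_measurable_fun m => s _; case: (K1 s) => a b; case: (K2 s).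
- have m : measurable_fun D (fun s => complex.Re (K1 s) * complex.Im (K2 s)
                                    + complex.Im (K1 s) * complex.Re (K2 s)).
    by apply: measurable_realfun.measurable_funD;
       apply: measurable_realfun.measurable_funM.
  by apply: eq_measurable_fun m => s _; case: (K1 s) => a b; case: (K2 s).
- exists (B1 * B2) => s Ds; rewrite normrM rmorphM /=.
  by apply: ler_pM => //; [apply: b1|apply: b2].
Qed.

Lemma mKD K1 K2 : mK K1 -> mK K2 -> mK (fun s => K1 s + K2 s).
Proof.
move=> [r1 i1 [B1 b1]] [r2 i2 [B2 b2]]; split.
- have m : measurable_fun D (fun s => complex.Re (K1 s) + complex.Re (K2 s)).
    by apply: measurable_realfun.measurable_funD.
  by apply: eq_measurable_fun m => s _; case: (K1 s) => a b; case: (K2 s).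
- have m : measurable_fun D (fun s => complex.Im (K1 s) + complex.Im (K2 s)).
    by apply: measurable_realfun.measurable_funD.
  by apply: eq_measurable_fun m => s _; case: (K1 s) => a b; case: (K2 s).
- exists (B1 + B2) => s Ds; rewrite rmorphD /=.
  by rewrite (le_trans (ler_normD _ _)) // lerD //; [apply: b1|apply: b2].
Qed.

Lemma mKc (c : R[i]) : mK (fun _ => c).
Proof.
split; [exact: measurable_cst|exact: measurable_cst|].
exists (complex.Re `|c|) => s _.
by rewrite -[`|c|]RRe_real // normr_real.
Qed.


Lemma bnd_of (h : R -> R) B : (forall s, D s -> `|h s| <= B) -> [bounded h x | x in D].
Proof.
move=> hB; rewrite /bounded_near.
apply: filterS (nbhs_pinfty_ge (num_real B)) => M BM s Ds.
exact: le_trans (hB s Ds) BM.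
Qed.

Hypothesis mD : measurable D.
Local Notation mu := (@lebesgue_measure R).

Definition cint (f : R -> R[i]) :=
  mu.-integrable D (EFin \o (fun s => complex.Re (f s))) /\
  mu.-integrable D (EFin \o (fun s => complex.Im (f s))).

Lemma cint_gK g K : mu.-integrable D (EFin \o g) -> mK K ->
  cint (fun s => (g s)%:C * K s).
Proof.
move=> ig [r i [B b]].
have bR : [bounded complex.Re (K x) | x in D].
  apply: (@bnd_of _ B) => s Ds; rewrite -lecR (le_trans (normc_ge_Re _)) //.
  exact: b.
have bI : [bounded complex.Im (K x) | x in D].
  apply: (@bnd_of _ B) => s Ds; rewrite -lecR.
  have -> : complex.Im (K s) = - complex.Re (K s * 'i).
    by case: (K s) => a c /=; ring.
  rewrite normrN (le_trans (normc_ge_Re _)) // normrM.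
  have -> : `|'i : R[i]| = 1.
    by rewrite normc_def /= expr0n /= add0r expr1n sqrtr1.
  by rewrite mulr1; exact: b.
split.
- move: (integrableMl (mconvD mD) ig (mconv r) bR); apply: (eq_integrable (mconvD mD)) => // s _ /=.
  by case: (K s) => a c /=; rewrite mul0r subr0.
- move: (integrableMl (mconvD mD) ig (mconv i) bI); apply: (eq_integrable (mconvD mD)) => // s _ /=.
  by case: (K s) => a c /=; rewrite mul0r addr0.
Qed.


Lemma intZ k (h : R -> R) : mu.-integrable D (EFin \o h) ->
  mu.-integrable D (EFin \o (fun s => k * h s)).
Proof.
move=> ih; move: (integrableZl (mconvD mD) k ih).
by apply: (eq_integrable (mconvD mD)) => s _ /=; rewrite EFinM.
Qed.

Lemma intD (h1 h2 : R -> R) : mu.-integrable D (EFin \o h1) ->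
  mu.-integrable D (EFin \o h2) ->
  mu.-integrable D (EFin \o (fun s => h1 s + h2 s)).
Proof.
move=> i1 i2; move: (integrableD (mconvD mD) i1 i2).
by apply: (eq_integrable (mconvD mD)) => s _ /=; rewrite EFinD.
Qed.

Lemma intB (h1 h2 : R -> R) : mu.-integrable D (EFin \o h1) ->
  mu.-integrable D (EFin \o h2) ->
  mu.-integrable D (EFin \o (fun s => h1 s - h2 s)).
Proof.
move=> i1 i2; move: (integrableB (mconvD mD) i1 i2).
by apply: (eq_integrable (mconvD mD)) => s _ /=; rewrite EFinB.
Qed.

Lemma cintD f g : cint f -> cint g -> cint (fun s => f s + g s).
Proof.
move=> [f1 f2] [g1 g2]; split.
- by move: (intD _ _ f1 g1); apply: (eq_integrable (mconvD mD)) => s _ /=; case: (f s); case: (g s).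
- by move: (intD _ _ f2 g2); apply: (eq_integrable (mconvD mD)) => s _ /=; case: (f s); case: (g s).
Qed.

Lemma cintZ c f : cint f -> cint (fun s => c * f s).
Proof.
move=> [f1 f2]; split.
- move: (intB _ _ (intZ (complex.Re c) _ f1) (intZ (complex.Im c) _ f2)).
  by apply: (eq_integrable (mconvD mD)) => s _ /=; case: (f s); case: c.
- move: (intD _ _ (intZ (complex.Re c) _ f2) (intZ (complex.Im c) _ f1)).
  by apply: (eq_integrable (mconvD mD)) => s _ /=; case: (f s); case: c.
Qed.

Lemma cRintD f g : cint f -> cint g ->
  cRint D (fun s => f s + g s) = cRint D f + cRint D g.
Proof.
move=> [f1 f2] [g1 g2]; rewrite /cRint.
rewrite (_ : (fun s => complex.Re (f s + g s)) = (fun s => complex.Re (f s) + complex.Re (g s))); last first.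
  by apply/funext => s; case: (f s); case: (g s).
rewrite (_ : (fun s => complex.Im (f s + g s)) = (fun s => complex.Im (f s) + complex.Im (g s))); last first.
  by apply/funext => s; case: (f s); case: (g s).
by rewrite !RintegralD // ?(mconvD mD).
Qed.

Lemma cRintZ c f : cint f -> cRint D (fun s => c * f s) = c * cRint D f.
Proof.
move=> [f1 f2]; rewrite /cRint.
rewrite (_ : (fun s => complex.Re (c * f s)) = (fun s => complex.Re c * complex.Re (f s) - complex.Im c * complex.Im (f s))); last first.
  by apply/funext => s; case: (f s); case: c.
rewrite (_ : (fun s => complex.Im (c * f s)) = (fun s => complex.Re c * complex.Im (f s) + complex.Im c * complex.Re (f s))); last first.
  by apply/funext => s; case: (f s); case: c.
rewrite RintegralB ?(mconvD mD) ?intZ // RintegralD ?(mconvD mD) ?intZ //.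
by rewrite !RintegralZl ?(mconvD mD) //; case: c.
Qed.

Lemma cRint_real (r : R -> R) : cRint D (fun s => (r s)%:C) = (Rintegral mu D r)%:C.
Proof.
rewrite /cRint /=; congr Complex.
by rewrite Rintegral_cst ?(mconvD mD) // mul0r.
Qed.


Lemma cRint_norm F k : cint F -> mu.-integrable D (EFin \o k) ->
  (forall s, D s -> `|F s| <= (k s)%:C) ->
  `|cRint D F| <= (2 * Rintegral mu D k)%:C.
Proof.
move=> [f1 f2] ik hk; rewrite /cRint.
set a := Rintegral _ _ _.
set b := Rintegral _ _ _.
have ha : `|a| <= Rintegral mu D k.
  apply: le_trans (le_normr_Rintegral (mconvD mD) f1) _.
  apply: le_Rintegral (mconvD mD) (integrable_norm f1) ik _ => s Ds.
  by rewrite -lecR (le_trans (normc_ge_Re _)) // hk.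
have hb : `|b| <= Rintegral mu D k.
  apply: le_trans (le_normr_Rintegral (mconvD mD) f2) _.
  apply: le_Rintegral (mconvD mD) (integrable_norm f2) ik _ => s Ds.
  by rewrite -lecR (le_trans (normc_ge_Im _)) // hk.
have -> : Complex a b = a%:C + 'i * b%:C by simpc.
apply: le_trans (ler_normD _ _) _.
rewrite normrM normi mul1r !normC_real -rmorphD lecR mulr2n mulrDl mul1r.
exact: lerD.
Qed.


Lemma deriv_G (g : R -> R) (d : R) (z : R[i]) : 0 < d ->
  mu.-integrable D (EFin \o g) ->
  (forall s, D s -> d <= nc (z - s%:C)) ->
  cderivable (fun u => cRint D (fun s => (g s)%:C / (u - s%:C))) z.
Proof.
move=> d0 ig hz.
have cA : forall u e, 0 < e -> (forall s, D s -> e <= nc (u - s%:C)) ->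
    cint (fun s => (g s)%:C * (u - s%:C)^-1).
  move=> u e e0 he; apply: cint_gK => //; apply: (mK_inv _ _ e0) => s Ds.
  by rewrite nc_ge he.
have mz : mK (fun s => (z - s%:C)^-1).
  by apply: (mK_inv _ _ d0) => s Ds; rewrite nc_ge hz.
set L := cRint D (fun s => (g s)%:C * (-1 * ((z - s%:C)^-1 * (z - s%:C)^-1))).
have cL : cint (fun s => (g s)%:C * (-1 * ((z - s%:C)^-1 * (z - s%:C)^-1))).
  by apply: cint_gK => //; apply: mKM; [exact: mKc|exact: mKM].
set M := Rintegral mu D (fun s => `|g s|).
have M0 : 0 <= M by apply: Rintegral_ge0 => s _; exact: normr_ge0.
rewrite /cderivable; apply/cvg_ex; exists L.
apply/cvgrPdist_le => eps eps0.
have epsE : eps = (complex.Re eps)%:C by rewrite RRe_real // gtr0_real.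
set e := complex.Re eps in epsE.
have e0 : 0 < e by rewrite -ltcR -epsE.
set del := Num.min (d / 2) (e * d ^+ 3 / (4 * (M + 1))).
have del0 : 0 < del.
  rewrite lt_min; apply/andP; split; apply: divr_gt0 => //; try lra.
  by rewrite mulr_gt0 // exprn_gt0.
exists del%:C => /=; first by rewrite ltcR.
move=> h hb hn0.
have hdel : nc h < del by move: hb; rewrite /ball_ /= sub0r normrN nc_lt.
have hd2 : nc h <= d / 2 by apply: ltW; apply: (lt_le_trans hdel); rewrite ge_min lexx.
have hu : forall s, D s -> d / 2 <= nc (h + z - s%:C).
  move=> s Ds; have := ncD (h + z - s%:C) (- h).
  rewrite (_ : h + z - s%:C + - h = z - s%:C); last by ring.
  rewrite ncN => H; have := hz s Ds; lra.
have d20 : 0 < d / 2 by rewrite divr_gt0.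
have c1 := cA _ _ d20 hu.
have c0 := cA _ _ d0 hz.
change (`|L - h^-1 * (cRint D (fun s => (g s)%:C / (h * 1 + z - s%:C)) -
     cRint D (fun s => (g s)%:C / (z - s%:C)))| <= eps).
rewrite mulr1.
have E : cRint D (fun s => (g s)%:C * (-1 * ((z - s%:C)^-1 * (z - s%:C)^-1)) +
     (- h^-1) * ((g s)%:C / (h + z - s%:C) + (-1) * ((g s)%:C / (z - s%:C)))) =
   L + (- h^-1) * (cRint D (fun s => (g s)%:C / (h + z - s%:C)) +
     (-1) * cRint D (fun s => (g s)%:C / (z - s%:C))).
  rewrite cRintD //; last by apply: cintZ; apply: cintD => //; apply: cintZ.
  rewrite cRintZ; last by apply: cintD => //; apply: cintZ.
  by rewrite cRintD ?cRintZ //; apply: cintZ.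
set G1 := cRint D (fun s => (g s)%:C / (h + z - s%:C)) in E *.
set G0 := cRint D (fun s => (g s)%:C / (z - s%:C)) in E *.
have -> : L - h^-1 * (G1 - G0) = L + - h^-1 * (G1 + -1 * G0) by ring.
rewrite -E epsE.
set c := nc h * (2 / d ^+ 3).
have ik : mu.-integrable D (EFin \o (fun s => c * `|g s|)).
  exact: intZ (integrable_norm ig).
apply: le_trans (cRint_norm _ _ _ ik _) _.
- apply: cintD => //; apply: cintZ; apply: cintD => //; exact: cintZ.
- move=> s Ds.
  have -> : (g s)%:C * (-1 * ((z - s%:C)^-1 * (z - s%:C)^-1)) +
     - h^-1 * ((g s)%:C / (h + z - s%:C) + -1 * ((g s)%:C / (z - s%:C))) =
     (g s)%:C * (- ((z - s%:C)^-1 * (z - s%:C)^-1) - h^-1 * (((z - s%:C) + h)^-1 - (z - s%:C)^-1)).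
    by rewrite (_ : h + z - s%:C = (z - s%:C) + h); ring.
  rewrite nc_le ncM nc_real mulrC; apply: ler_wpM2r; first exact: normr_ge0.
  by apply: pt_bound => //; exact: hz.
- rewrite lecR RintegralZl ?(mconvD mD) ?integrable_norm // -/M.
  have -> : 2 * (c * M) = (4 * nc h * M) / d ^+ 3 by rewrite /c; ring.
  have d3 : 0 < d ^+ 3 by rewrite exprn_gt0.
  rewrite ler_pdivrMr //.
  have : nc h <= e * d ^+ 3 / (4 * (M + 1)).
    by apply: ltW; apply: (lt_le_trans hdel); rewrite ge_min lexx orbT.
  rewrite ler_pdivlMr; last by lra.
  have := nc_ge0 h; nra.
Qed.

End S.

Lemma eq_cRint {R : realType} (D : set R) (f g : R -> R[i]) :
  {in D, f =1 g} -> cRint D f = cRint D g.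
Proof.
move=> fg; rewrite /cRint; congr Complex; apply: eq_Rintegral => s Ds; by rewrite fg.
Qed.

Lemma int_poly (R : realType) (I : interval R) (w : R -> R) :
  (forall k : nat, (@lebesgue_measure R).-integrable [set` I] (fun s => (s ^+ k * w s)%:E)) ->
  forall q : {poly R}, (@lebesgue_measure R).-integrable [set` I] (EFin \o (fun s => q.[s] * w s)).
Proof.
move=> Hm q.
have mD : measurable [set` I] := measurable_itv I.
suff H : forall k, (@lebesgue_measure R).-integrable [set` I]
    (EFin \o (fun s => q.[s] * (s ^+ k * w s))).
  by move: (H 0%N); apply: (eq_integrable (mconvD mD)) => s _ /=; rewrite expr0 mul1r.
elim/poly_ind: q => [|q c IH] k.
  move: (@integrable0 _ _ _ (@lebesgue_measure R) [set` I]).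
  by apply: (eq_integrable (mconvD mD)) => s _ /=; rewrite horner0 mul0r.
have := intD _ mD _ _ (IH k.+1) (intZ _ mD c _ (Hm k)).
apply: (eq_integrable (mconvD mD)) => s _ /=.
by rewrite hornerMXaddC exprS; congr (_%:E); ring.
Qed.

Lemma cpolyZ (R : realType) (q : {poly R}) (c : R) z : cpoly (c *: q) z = c%:C * cpoly q z.
Proof. by rewrite /cpoly map_polyZ hornerZ. Qed.
Lemma cpolyB (R : realType) (q r : {poly R}) z : cpoly (q - r) z = cpoly q z - cpoly r z.
Proof. by rewrite /cpoly rmorphB hornerD hornerN. Qed.
Lemma cpolyXM (R : realType) (q : {poly R}) c z : cpoly (('X - c%:P) * q) z = (z - c%:C) * cpoly q z.
Proof. by rewrite /cpoly rmorphM rmorphB /= map_polyX map_polyC hornerM hornerXsubC. Qed.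
Lemma cpolyC (R : realType) (c : R) z : cpoly c%:P z = c%:C.
Proof. by rewrite /cpoly map_polyC hornerC. Qed.

Lemma rcM (R : rcfType) (x y : R) : (x * y)%:C = x%:C * y%:C.
Proof. by rewrite rmorphM. Qed.
Lemma rcB (R : rcfType) (x y : R) : (x - y)%:C = x%:C - y%:C.
Proof. by rewrite rmorphB. Qed.
Lemma rcD (R : rcfType) (x y : R) : (x + y)%:C = x%:C + y%:C.
Proof. by rewrite rmorphD. Qed.
Arguments rcM {R}. Arguments rcB {R}. Arguments rcD {R}.

Section Rec.
Context {R : realType} (I : interval R) (w : R -> R).
Hypothesis Hmom : forall k : nat,
  (@lebesgue_measure R).-integrable [set` I] (fun s => (s ^+ k * w s)%:E).
Variables (z : R[i]) (d : R).
Hypothesis d0 : 0 < d.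
Hypothesis Hd : forall s, s \in I -> d%:C <= `|z - s%:C|.

Local Notation D := ([set` I]%classic).
Local Notation mu := (@lebesgue_measure R).

Let mD : measurable D := measurable_itv I.

Lemma ceps (q : {poly R}) : cint D (fun s => (q.[s] * w s)%:C / (z - s%:C)).
Proof.
apply: (cint_gK D mD); first exact: int_poly.
exact: (mK_inv D _ _ d0).
Qed.

Lemma eps_rec_gen (P0 P1 P2 : {poly R}) a2 b1 a1 :
  a2 *: P2 = ('X - b1%:P) * P1 - a1 *: P0 ->
  a2%:C * cRint D (fun s => (P2.[s] * w s)%:C / (z - s%:C)) =
  (z - b1%:C) * cRint D (fun s => (P1.[s] * w s)%:C / (z - s%:C))
  - (Rintegral mu D (fun s => P1.[s] * w s))%:C
  - a1%:C * cRint D (fun s => (P0.[s] * w s)%:C / (z - s%:C)).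
Proof.
move=> H.
have cr : cint D (fun s => ((P1.[s] * w s)%:C)).
  split; first exact: (int_poly _ _ _ Hmom P1).
  by move: (@integrable0 _ _ _ mu D); apply: (eq_integrable (mconvD mD)).
rewrite -cRintZ //; last exact: ceps.
transitivity (cRint D (fun s => (z - b1%:C) * ((P1.[s] * w s)%:C / (z - s%:C)) +
   ((-1) * ((P1.[s] * w s)%:C) + (- a1%:C) * ((P0.[s] * w s)%:C / (z - s%:C))))).
  apply: eq_cRint => s; rewrite inE => Ds.
  have zs : z - s%:C != 0.
    rewrite -normr_eq0; apply/negP => /eqP h0.
    by have := Hd s Ds; rewrite h0 lecR leNgt d0.
  have Hs : a2 * P2.[s] = (s - b1) * P1.[s] - a1 * P0.[s].
    by have := congr1 (horner^~ s) H; rewrite /= hornerZ hornerD hornerN hornerM hornerXsubC hornerZ.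
  rewrite mulrA -rcM [a2 * _]mulrA Hs mulrBl rcB -!mulrA !rcM rcB.
  by field.
rewrite cRintD //; first last.
- apply: cintD => //; apply: cintZ => //; exact: ceps.
- by apply: cintZ => //; exact: ceps.
rewrite cRintZ //; last exact: ceps.
rewrite cRintD //; first last.
- by apply: cintZ => //; exact: ceps.
- exact: cintZ.
rewrite !cRintZ //; last exact: ceps.
rewrite cRint_real //.
ring.
Qed.

End Rec.

Lemma quot (R : rcfType) (f g : R[i] -> R[i]) z :
  cderivable f z -> cderivable g z -> g z != 0 ->
  cderive (fun u => f u / g u) z = (cderive f z * g z - f z * cderive g z) / (g z)^+2.
Proof.
move=> df dg gz.
rewrite /cderive !derive1E.
have dV := derivableV gz dg.
have H : 'D_1 (fun u : R[i]^o => (f u / g u : R[i]^o)) z = f z *: 'D_1 (fun y : R[i]^o => ((g y)^-1 : R[i]^o)) z + (g z)^-1 *: 'D_1 (f : R[i]^o -> R[i]^o) z := deriveM df dV.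
rewrite H (deriveV gz dg).
move: ('D_1 (f : R[i]^o -> R[i]^o) z) ('D_1 (g : R[i]^o -> R[i]^o) z) => a b.
move: a b; change (forall a b : R[i], f z * (- (g z) ^- 2 * b) + (g z)^-1 * a = (a * g z - f z * b) / g z ^+ 2).
move: (f z) (g z) gz => x y yn0 a b.
by field.
Qed.

Lemma rc0 (R : rcfType) : (0 : R)%:C = 0.
Proof. by rewrite rmorph0. Qed.

Theorem corollary2p2 (R : realType) (I : interval R) (w : R -> R)
  (V W : {poly R}) (p : nat -> {poly R}) (a b : nat -> R)
  (wc : R[i] -> R[i]) (O : set R[i]) (n : nat) (z : R[i]) :
  (* w is a weight on I with finite moments *)
  measurable_fun [set` I] w ->
  (forall s, s \in I -> 0 <= w s) ->
  (forall k : nat,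
     (@lebesgue_measure R).-integrable [set` I] (fun s => (s ^+ k * w s)%:E)) ->
  (* logarithmic derivative of w is 2V/W *)
  W != 0 ->
  (forall s, interior [set` I] s ->
     0 < w s /\
     (W.[s] != 0 ->
        derivable (fun t => ln (w t)) s 1 /\
        (fun t => ln (w t))^`()%classic s = 2 * V.[s] / W.[s])) ->
  (* p_n orthonormal for w on I, p_n = gamma_n x^n + ..., gamma_n > 0 *)
  (forall m, size (p m) = m.+1 /\ 0 < lead_coef (p m)) ->
  (forall m k, Rintegral (@lebesgue_measure R) [set` I]
                 (fun s => (p m).[s] * (p k).[s] * w s) = (m == k)%:R) ->
  (* three term recurrence a_{m+1} p_{m+1} = (x - b_m) p_m - a_m p_{m-1},
     with p_{-1} = 0 *)
  a 1 *: p 1 = ('X - (b 0)%:P) * p 0 ->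
  (forall m, a m.+2 *: p m.+2 = ('X - (b m.+1)%:P) * p m.+1 - a m.+1 *: p m) ->
  (* wc : (complex-analytic continuation of) w near z, satisfying
     W wc' = 2 V wc (i.e. wc'/wc = 2V/W) on an open neighbourhood O of z *)
  open (O : set R[i]^o) -> O z ->
  (forall u, O u -> cderivable wc u /\
                    cpoly W u * cderive wc u = 2 * cpoly V u * wc u) ->
  wc z != 0 ->
  (* z lies off I (at positive distance from I) *)
  (exists2 d : R, 0 < d & forall s, s \in I -> d%:C <= `|z - s%:C|) ->
  (1 <= n)%N ->
  cpoly W z * cderive (fun u => eps I w p n u / wc u) z =
    (Omega I w p a V W n z - cpoly V z) * (eps I w p n z / wc z)
    - (a n)%:C * Theta I w p V W n z * (eps I w p n.-1 z / wc z).
Proof.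
move=> Hmw Hw0 Hmom HW0 Hlog Hsize Horth Hrec0 Hrec Oop Oz Hwc wcz [d d0 Hd] n1.
have mD : measurable ([set` I]%classic) := measurable_itv I.
have hz : forall s, ([set` I]%classic) s -> d <= nc (z - s%:C).
  by move=> s Ds; rewrite -nc_ge; exact: Hd.
have ig := int_poly _ _ _ Hmom.
pose E m := eps I w p m z.
pose P m := cpoly (p m) z.
have [c p0E] : exists c, p 0%N = c%:P.
  by exists (p 0%N)`_0; apply/size1_polyC; rewrite (Hsize 0%N).1.
have c0 : c != 0.
  by have := (Hsize 0%N).2; rewrite p0E lead_coefC => h; rewrite gt_eqF.
have Iw : forall m, Rintegral (@lebesgue_measure R) [set` I]
     (fun s => (p m).[s] * (p 0%N).[s] * w s) =
   c * Rintegral (@lebesgue_measure R) [set` I] (fun s => (p m).[s] * w s).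
  move=> m; rewrite -RintegralZl ?(mconvD mD) //.
  by apply: eq_Rintegral => s _; rewrite p0E hornerC; ring.
have I0 : forall m, (0 < m)%N ->
    Rintegral (@lebesgue_measure R) [set` I] (fun s => (p m).[s] * w s) = 0.
  move=> m m0; have := Horth m 0%N; rewrite Iw.
  have -> : (m == 0%N) = false by case: m m0.
  by move/eqP; rewrite mulf_eq0 (negbTE c0) /= => /eqP.
have I00 : P 0%N * (Rintegral (@lebesgue_measure R) [set` I] (fun s => (p 0%N).[s] * w s))%:C = 1.
  have := Horth 0%N 0%N; rewrite Iw eqxx /= => h.
  by rewrite /P {1}p0E cpolyC -rcM h rmorph1.
have Cas : forall m, (0 < m)%N -> (a m)%:C * (E m.-1 * P m - P m.-1 * E m) = 1.
  elim=> [//|m IH] _; case: m IH => [_|m IH].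
  - have hP : (a 1%N)%:C * P 1%N = (z - (b 0%N)%:C) * P 0%N.
      by rewrite /P -cpolyZ Hrec0 cpolyXM.
    have hE : (a 1%N)%:C * E 1%N = (z - (b 0%N)%:C) * E 0%N
       - (Rintegral (@lebesgue_measure R) [set` I] (fun s => (p 0%N).[s] * w s))%:C
       - (0 : R)%:C * E 0%N.
      apply: (eps_rec_gen I w Hmom z d d0 Hd).
      by rewrite scale0r subr0.
    rewrite /=.
    transitivity (E 0%N * ((a 1%N)%:C * P 1%N) - P 0%N * ((a 1%N)%:C * E 1%N)).
      by ring.
    rewrite hP hE rc0 -I00; ring.
  - have hP : (a m.+2)%:C * P m.+2 = (z - (b m.+1)%:C) * P m.+1 - (a m.+1)%:C * P m.
      by rewrite /P -cpolyZ Hrec cpolyB cpolyXM cpolyZ.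
    have hE : (a m.+2)%:C * E m.+2 = (z - (b m.+1)%:C) * E m.+1
       - (Rintegral (@lebesgue_measure R) [set` I] (fun s => (p m.+1).[s] * w s))%:C
       - (a m.+1)%:C * E m.
      exact: (eps_rec_gen I w Hmom z d d0 Hd).
    rewrite I0 // rc0 in hE.
    rewrite /=.
    transitivity (E m.+1 * ((a m.+2)%:C * P m.+2) - P m.+1 * ((a m.+2)%:C * E m.+2)).
      by ring.
    rewrite hP hE -(IH erefl) /=; ring.
have dE : cderivable (eps I w p n) z.
  exact: (deriv_G _ mD _ _ z d0 (ig (p n)) hz).
have [dw hw] := Hwc z Oz.
rewrite (quot _ _ _ _ dE dw wcz).
have C := Cas n n1.
rewrite /E /P in C.
rewrite /Omega /Theta.
move: C hw; set Ep := cderive (eps I w p n) z; set En := eps I w p n z.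
set Fn := eps I w p n.-1 z; set Pn := cpoly (p n) z; set Qn := cpoly (p n.-1) z.
set Pp := cpoly (p n)^`() z; set Wz := cpoly W z; set Vz := cpoly V z.
set wz := wc z; set wp := cderive wc z; set an := (a n)%:C => C hw.
have key : (an * Wz * (Fn * Pp - Qn * Ep) + an * Vz * (Fn * Pn + En * Qn) - Vz) * En
   - an * (Wz * (En * Pp - Pn * Ep) + 2 * Vz * En * Pn) * Fn = Wz * Ep - 2 * Vz * En.
  transitivity (Wz * Ep * (an * (Fn * Pn - Qn * En)) - Vz * En * (an * (Fn * Pn - Qn * En)) - Vz * En).
    by ring.
  by rewrite C; ring.
transitivity ((Wz * Ep * wz - En * (Wz * wp)) / wz ^+ 2); first by ring.
rewrite hw.
transitivity (((an * Wz * (Fn * Pp - Qn * Ep) + an * Vz * (Fn * Pn + En * Qn) - Vz) * En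
   - an * (Wz * (En * Pp - Pn * Ep) + 2 * Vz * En * Pn) * Fn) / wz); last by ring.
rewrite key.
by field.
Qed.
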